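(* Let $\alpha=1/10$ and $V(\mathbf{y})=1+\sum_{i=1}^{n-1}\alpha^iy_i$ for $\mathbf{y}\in\mathbb{R}_+^{n-1}$. Then for all $\mathbf{y}\in\mathbb{R}_+^{n-1}$, $$\mathcal{L}_nV(\mathbf{y})\le\alpha-\frac{1-\alpha}{2}\sum_{i=1}^{n-1}\alpha^iy_i^2,$$ and consequently $\mathcal{L}_nV(\mathbf{y})\le\alpha-\frac{(1-\alpha)^2}{2\alpha}(V(\mathbf{y})-1)^2$.
   Context: Fix $n\ge2$ and a probability law $\theta$ on $(0,\infty)$ with $\int z\,\theta(dz)=1$. $\mathcal{L}_n$ is the generator of the gap process of the Stochastic Follow-the-Leader system, acting on functions $f$ on $\mathbb{R}_+^{n-1}$ by $$\mathcal{L}_nf(\mathbf{y})=y_{n-1}\mathbb{E}_U[f(\mathbf{y}-y_{n-1}Ue_{n-1})-f(\mathbf{y})]+\sum_{i=1}^{n-2}y_i\mathbb{E}_U[f(\mathbf{y}+y_iU(e_{i+1}-e_i))-f(\mathbf{y})]+\mathbb{E}_\theta[f(\mathbf{y}+Ze_1)-f(\mathbf{y})],$$ with $U\sim\mathrm{U}(0,1)$, $Z\sim\theta$ (applied to linear functions, where the expectations are finite). *)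

(* Defs.v *)
From HB Require Import structures.
From mathcomp Require Import all_boot all_order all_algebra.
From mathcomp Require Import all_classical all_reals all_analysis.
Set Implicit Arguments. Unset Strict Implicit. Unset Printing Implicit Defensive.
Import Order.TTheory GRing.Theory Num.Theory.
Local Open Scope ring_scope.
Local Open Scope classical_set_scope.

(* Gap vectors y = (y_1, ..., y_m) in R^m are row vectors 'rV[R]_m;
   the paper's coordinate y_k (1 <= k <= m) is stored at ordinal k-1. *)
Definition ycoord {R : realType} {m : nat} (y : 'rV[R]_m) (k : nat) : R :=
  \sum_(j < m | j.+1 == k) y ord0 j.

(* The standard basis vector e_k (1-based; zero if k is out of range). *)
Definition ebasis {R : realType} (m k : nat) : 'rV[R]_m :=
  \row_(j < m) (if j.+1 == k then 1 else 0).

Definition EU {R : realType} (g : R -> R) : R :=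
  Rintegral (uniform_prob (@ltr01 R)) setT g.

Definition Etheta {R : realType} (theta : probability R R) (g : R -> R) : R :=
  Rintegral theta setT g.

(* Generator of the gap process of the Stochastic Follow-the-Leader system,
   acting on f : R^{n-1} -> R. *)
Definition Lgen {R : realType} (n : nat) (theta : probability R R)
    (f : 'rV[R]_n.-1 -> R) (y : 'rV[R]_n.-1) : R :=
  ycoord y n.-1 *
    EU (fun u => f (y - (ycoord y n.-1 * u) *: ebasis n.-1 n.-1) - f y)
  + \sum_(1 <= i < n.-1)
      ycoord y i *
        EU (fun u => f (y + (ycoord y i * u) *:
                           (ebasis n.-1 i.+1 - ebasis n.-1 i)) - f y)
  + Etheta theta (fun z => f (y + z *: ebasis n.-1 1) - f y).

Definition alpha {R : realType} : R := 10%:R^-1.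

Definition Vlyap {R : realType} (n : nat) (y : 'rV[R]_n.-1) : R :=
  1 + \sum_(1 <= i < n) alpha ^+ i * ycoord y i.

(* Main.v *)
Require Import Defs.
From HB Require Import structures.
From mathcomp Require Import all_boot all_order all_algebra.
From mathcomp Require Import all_classical all_reals all_analysis.
From mathcomp Require Import measurable_realfun.
From mathcomp Require Import ring lra.
Import Order.TTheory GRing.Theory Num.Theory.
Import numFieldNormedType.Exports.
Local Open Scope ring_scope.
Local Open Scope classical_set_scope.

Section S.
Variable R : realType.
Let mu := @lebesgue_measure R.
Lemma I01 : (\int[mu]_(x in `[0%R, 1%R]) (x%:E) = (2^-1 : R)%:E)%E.
Proof.
have dF : forall x : R, derivable (fun x : R => x ^+ 2 / 2) x 1.
  move=> x; apply: derivableM => //; exact: derivableX.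
have cF : continuous (fun x : R => x ^+ 2 / 2).
  move=> x; apply/differentiable_continuous/derivable1_diffP; exact: dF.
rewrite (@continuous_FTC2 _ _ (fun x : R => x ^+ 2 / 2)) //.
- by rewrite expr0n /= mul0r expr1n mul1r oppr0 adde0.
- by apply: continuous_in_subspaceT => x _; exact: cvg_id.
- split.
  + by move=> x _; exact: dF.
  + by apply: cvg_at_right_filter; exact: cF.
  + by apply: cvg_at_left_filter; exact: cF.
- move=> x _. rewrite derive1E deriveM //= ?derivableX // derive_cst scaler0 add0r exp_derive /= expr1.
  rewrite /GRing.scale /= mulr1 mulrA mulVf ?mul1r // pnatr_eq0.
Qed.

Let P := uniform_prob (@ltr01 R).

Lemma I01abs : (\int[mu]_(x in `[0%R, 1%R]) `|x%:E| = (2^-1 : R)%:E)%E.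
Proof.
rewrite -I01; apply: eq_integral => x; rewrite inE /= in_itv /= => /andP[x0 _].
by rewrite ger0_norm.
Qed.

Lemma unif_int : P.-integrable setT (EFin \o id).
Proof.
apply/integrableP; split; first exact/measurable_EFinP.
rewrite integral_uniform //=; last first.
  exact: measurableT_comp.
rewrite I01abs subr0 invr1 mul1e; exact: ltry.
Qed.

Lemma unif_id : (\int[P]_x (x%:E) = (2^-1 : R)%:E)%E.
Proof.
have h0 : forall x : R, x \in `[0%R, 1%R] -> (0 <= x%:E)%E.
  by move=> x; rewrite inE /= in_itv /= => /andP[x0 _]; rewrite lee_fin.
rewrite integralE.
rewrite !integral_uniform //=; last 2 first.
  exact/measurable_funeneg/measurable_EFinP.
  exact/measurable_funepos/measurable_EFinP.
rewrite subr0 invr1 !mul1e.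
rewrite [X in (_ - X)%E]integral0_eq; last first.
  move=> x xI; apply: (ge0_funenegE (D := `[0%R, 1%R]%classic)); last exact: mem_set.
  by move=> y yI; apply: h0; exact: mem_set.
rewrite (_ : forall z : \bar R, (z - 0%R)%E = z); last by move=> z; exact: sube0.
rewrite -I01; apply: eq_integral => x xI.
apply: (ge0_funeposE (D := `[0%R, 1%R]%classic)); last by [].
by move=> y yI; apply: h0; exact: mem_set.
Qed.

Lemma EU_lin (c : R) : EU (fun u => c * u) = c / 2.
Proof.
rewrite /EU RintegralZl //; last exact: unif_int.
by rewrite /Rintegral unif_id /= mulrC.
Qed.

End S.
Lemma Etheta_lin (R : realType) (theta : probability R R) (c : R) :
  (\int[theta]_z (z%:E) = 1)%E -> Etheta theta (fun z => c * z) = c.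
Proof.
move=> h1.
have mf : measurable_fun setT (fun z : R => z%:E) by exact/measurable_EFinP.
have hint : theta.-integrable setT (fun z : R => z%:E).
  apply/integrableP; split => //.
  have -> : (\int[theta]_x `|x%:E| = \int[theta]_x ((fun z : R => z%:E)^\+ x + (fun z : R => z%:E)^\- x))%E.
    by apply: eq_integral => x _; have := congr1 (fun f => f x) (fune_abse (fun z : R => z%:E)).
  rewrite ge0_integralD //; last 2 first.
    exact: measurable_funepos.
    exact: measurable_funeneg.
  have h2 := h1; rewrite integralE in h2; move: h2.
  have p0 : (0 <= \int[theta]_x ((fun z : R => z%:E)^\+ x))%E by apply: integral_ge0 => x _; exact: funepos_ge0.
  have q0 : (0 <= \int[theta]_x ((fun z : R => z%:E)^\- x))%E by apply: integral_ge0 => x _; exact: funeneg_ge0.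
  move: p0 q0; move: (\int[theta]_x ((fun z : R => z%:E)^\+ x))%E (\int[theta]_x ((fun z : R => z%:E)^\- x))%E => p q.
  case: p => [p| |] //; case: q => [q| |] //.
  by move=> _ _ _; rewrite -EFinD ltry.
rewrite /Etheta RintegralZl //.
by rewrite /Rintegral h1 /= mulr1.
Qed.
Section Alg.
Variable R : realType.

Lemma ycoordD m (y v : 'rV[R]_m) i : ycoord (y + v) i = ycoord y i + ycoord v i.
Proof. by rewrite /ycoord -big_split; apply: eq_bigr => j _; rewrite mxE. Qed.

Lemma ycoordZ m (a : R) (v : 'rV[R]_m) i : ycoord (a *: v) i = a * ycoord v i.
Proof. by rewrite /ycoord mulr_sumr; apply: eq_bigr => j _; rewrite mxE. Qed.

Lemma ycoordN m (v : 'rV[R]_m) i : ycoord (- v) i = - ycoord v i.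
Proof. by rewrite -scaleN1r ycoordZ mulN1r. Qed.

Lemma ycoord_ord m (v : 'rV[R]_m) (i : 'I_m) : ycoord v i.+1 = v ord0 i.
Proof. by rewrite /ycoord (big_pred1 i). Qed.

Lemma Ssum m (v : 'rV[R]_m) :
  \sum_(1 <= i < m.+1) alpha ^+ i * ycoord v i = \sum_(j < m) alpha ^+ j.+1 * v ord0 j.
Proof.
rewrite big_add1 /= big_mkord; apply: eq_bigr => i _; by rewrite ycoord_ord.
Qed.

Lemma S_e m k : (1 <= k <= m)%N ->
  \sum_(1 <= i < m.+1) alpha ^+ i * ycoord (ebasis m k : 'rV[R]_m) i = alpha ^+ k.
Proof.
case: k => [|k] // /andP[_ hk].
rewrite Ssum (bigD1 (Ordinal hk)) //= mxE eqxx mulr1 big1 ?addr0 // => j hj.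
have hj' : (j : nat) != k := hj.
by rewrite mxE eqSS (negbTE hj') mulr0.
Qed.

Lemma VD n (y v : 'rV[R]_n.-1) :
  @Vlyap R n (y + v) - @Vlyap R n y = \sum_(1 <= i < n) alpha ^+ i * ycoord v i.
Proof.
rewrite /Vlyap.
under eq_bigr do rewrite ycoordD mulrDr.
rewrite big_split /=; ring.
Qed.

Lemma SZ n (a : R) (v : 'rV[R]_n) :
  \sum_(1 <= i < n.+1) alpha ^+ i * ycoord (a *: v) i =
  a * \sum_(1 <= i < n.+1) alpha ^+ i * ycoord v i.
Proof.
rewrite mulr_sumr; apply: eq_bigr => i _; rewrite ycoordZ; ring.
Qed.

Lemma SB n (v w : 'rV[R]_n) :
  \sum_(1 <= i < n.+1) alpha ^+ i * ycoord (v - w) i =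
  \sum_(1 <= i < n.+1) alpha ^+ i * ycoord v i - \sum_(1 <= i < n.+1) alpha ^+ i * ycoord w i.
Proof.
rewrite -sumrB; apply: eq_bigr => i _; rewrite ycoordD ycoordN; ring.
Qed.


Lemma alpha_gt0 : 0 < alpha :> R.
Proof. by rewrite /alpha invr_gt0 ltr0n. Qed.

Lemma alpha10 : 10%:R * alpha = 1 :> R.
Proof. by rewrite /alpha mulfV // pnatr_eq0. Qed.

Lemma alpha_lt1 : alpha < 1 :> R.
Proof. have := alpha10; have := alpha_gt0; lra. Qed.

Lemma geo N : \sum_(1 <= i < N.+1) alpha ^+ i + alpha ^+ N.+1 / (1 - alpha) = alpha / (1 - alpha) :> R.
Proof.
have h : 1 - alpha != 0 :> R by rewrite subr_eq0 eq_sym lt_eqF // alpha_lt1.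
elim: N => [|N IH]; first by rewrite big_geq // add0r expr1.
rewrite big_nat_recr //= -IH -addrA; congr (_ + _).
rewrite [alpha ^+ N.+2]exprS; field.
exact: h.
Qed.

Lemma geo_le N : \sum_(1 <= i < N.+1) alpha ^+ i <= alpha / (1 - alpha) :> R.
Proof.
rewrite -(geo N) lerDl; apply: divr_ge0.
  by apply: exprn_ge0; exact: ltW alpha_gt0.
by rewrite subr_ge0; exact: ltW alpha_lt1.
Qed.

Lemma sq_expand N (a b : nat -> R) t :
  \sum_(1 <= i < N) a i * (b i - t) ^+ 2 =
  \sum_(1 <= i < N) a i * b i ^+ 2 - 2%:R * t * \sum_(1 <= i < N) a i * b i
  + t ^+ 2 * \sum_(1 <= i < N) a i.
Proof.
rewrite !mulr_sumr -sumrB -big_split /=; apply: eq_bigr => i _; ring.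
Qed.

Lemma CS N (b : nat -> R) :
  9%:R * (\sum_(1 <= i < N.+1) alpha ^+ i * b i) ^+ 2 <= \sum_(1 <= i < N.+1) alpha ^+ i * b i ^+ 2.
Proof.
set X := \sum_(_ <= i < _) _ * b i.
set Q := \sum_(_ <= i < _) _ * _ ^+ 2.
have h0 : 0 <= \sum_(1 <= i < N.+1) alpha ^+ i * (b i - 9%:R * X) ^+ 2.
  apply: sumr_ge0 => i _; apply: mulr_ge0; first by apply: exprn_ge0; exact: ltW alpha_gt0.
  by rewrite exprn_even_ge0.
rewrite sq_expand -/X -/Q in h0.
have hS := geo_le N.
have e : alpha / (1 - alpha) = 9%:R^-1 :> R.
  have h := alpha10; have -> : 1 - alpha = 9%:R * alpha :> R by lra.
  by rewrite invfM mulrCA mulfV ?mulr1 // gt_eqF // alpha_gt0.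
have hS' : 9%:R * \sum_(1 <= i < N.+1) alpha ^+ i <= 1 :> R.
  rewrite e in hS; have h9 : (0 : R) <= 9%:R by rewrite ler0n.
  by have := ler_wpM2l h9 hS; rewrite mulfV // pnatr_eq0.
set S := \sum_(_ <= i < _) alpha ^+ i in h0 hS'.
have hX : 0 <= X ^+ 2 by rewrite exprn_even_ge0.
nra.
Qed.

End Alg.

Theorem mainTheorem10 (R : realType) (n : nat) (theta : probability R R) :
  (2 <= n)%N ->
  theta `]-oo, 0] = 0%E ->
  (\int[theta]_z (z%:E) = 1)%E ->
  forall y : 'rV[R]_n.-1,
    (forall j, 0 <= y ord0 j) ->
    @Lgen R n theta (@Vlyap R n) y
      <= alpha - (1 - alpha) / 2%:R *
                 \sum_(1 <= i < n) alpha ^+ i * ycoord y i ^+ 2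
    /\
    @Lgen R n theta (@Vlyap R n) y
      <= alpha - (1 - alpha) ^+ 2 / (2%:R * alpha) * (@Vlyap R n y - 1) ^+ 2.
Proof.
move=> n2 _ h1 y _.
case: n n2 y => [|[|k]] // _ y.
rewrite /Lgen /=.
set m := k.+1.
have T1 : EU (fun u => @Vlyap R k.+2 (y - (ycoord y m * u) *: ebasis m m) - @Vlyap R k.+2 y)
   = - (alpha ^+ m * ycoord y m) / 2%:R.
  rewrite -EU_lin; congr EU; apply/funext => u.
  rewrite -scaleNr VD SZ S_e ?leqnn //; ring.
have T2 : \sum_(1 <= i < m) ycoord y i * EU (fun u => @Vlyap R k.+2
          (y + (ycoord y i * u) *: (ebasis m i.+1 - ebasis m i)) - @Vlyap R k.+2 y)
   = - ((1 - alpha) / 2%:R * \sum_(1 <= i < m) alpha ^+ i * ycoord y i ^+ 2).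
  rewrite mulr_sumr -sumrN; apply: eq_big_nat => i /andP[hi1 hi2].
  have hA : (1 <= i.+1 <= m)%N by rewrite /= hi2.
  have hB : (1 <= i <= m)%N by rewrite hi1 ltnW.
  rewrite (_ : EU _ = (alpha ^+ i.+1 - alpha ^+ i) * ycoord y i / 2%:R).
    rewrite exprS; ring.
  rewrite -EU_lin; congr EU; apply/funext => u.
  by rewrite VD SZ SB !S_e //; ring.
have T3 : Etheta theta (fun z => @Vlyap R k.+2 (y + z *: ebasis m 1) - @Vlyap R k.+2 y) = alpha.
  rewrite -[RHS](@Etheta_lin R theta alpha h1); congr Etheta; apply/funext => z.
  by rewrite VD SZ S_e // expr1 mulrC.
rewrite T1 T2 T3.
have G1 : ycoord y m * (- (alpha ^+ m * ycoord y m) / 2%:R) +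
    - ((1 - alpha) / 2%:R * \sum_(1 <= i < m) alpha ^+ i * ycoord y i ^+ 2) + alpha <=
    alpha - (1 - alpha) / 2%:R * \sum_(1 <= i < m.+1) alpha ^+ i * ycoord y i ^+ 2.
  rewrite [X in _ <= _ - _ * X]big_nat_recr //=.
  have ht : 0 <= alpha ^+ m * ycoord y m ^+ 2.
    by apply: mulr_ge0; [apply: exprn_ge0; exact: ltW (@alpha_gt0 R) | rewrite exprn_even_ge0].
  have := mulr_ge0 ht (ltW (@alpha_gt0 R)).
  move: ht; rewrite !expr2 => ht ht2.
  set A := alpha ^+ m in ht ht2 *; set Y := ycoord y m in ht ht2 *.
  set Sg := \sum_(_ <= _ < _) _.
  nra.
split => //.
apply: (le_trans G1).
rewrite lerD2l lerN2.
have -> : (1 - alpha) ^+ 2 / (2%:R * alpha) = (1 - alpha) / 2%:R * 9%:R :> R.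
  have h := @alpha10 R; have hp := @alpha_gt0 R.
  have e9 : 1 - alpha = 9%:R * alpha :> R by lra.
  rewrite e9 expr2 invfM -!mulrA; congr (_ * _).
  by congr (_ * _); rewrite [alpha * (_ / _)]mulrCA mulfV ?gt_eqF // mulr1 mulrC.
rewrite -mulrA ler_wpM2l //.
  by apply: divr_ge0; rewrite ?ler0n // subr_ge0; exact: ltW (@alpha_lt1 R).
rewrite /Vlyap [1 + _]addrC addrK.
exact: (@CS R m (fun i => ycoord y i)).
Qed.
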